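(* For any compact metric spaces $X$ and $Y$, $$d_{GH}\bigl(\mathcal{H}(X), \mathcal{H}(Y)\bigr) \le d_{GH}(X, Y).$$
   Context: For a metric space $W$, $\mathcal{H}(W)$ is the family of all nonempty bounded closed subsets of $W$ with the Hausdorff distance $|PQ|_W = \max\{\sup_{p\in P}\inf_{q\in Q}|pq|, \sup_{q\in Q}\inf_{p\in P}|pq|\}$; if $W$ is compact, so is $\mathcal{H}(W)$. $d_{GH}(X,Y)$ is the Gromov–Hausdorff distance: the infimum of $r$ such that there is a metric space $Z$ and subsets $X',Y'\subseteq Z$ isometric to $X,Y$ respectively with $|X'Y'|_Z \le r$. *)

(* Defs.v *)
From Stdlib Require Import Reals ClassicalEpsilon.
Open Scope R_scope.

Record MetricSpace := {
  carrier :> Type;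
  mdist : carrier -> carrier -> R;
  dist_nonneg : forall x y, 0 <= mdist x y;
  dist_eq0 : forall x y, mdist x y = 0 <-> x = y;
  dist_sym : forall x y, mdist x y = mdist y x;
  dist_tri : forall x y z, mdist x z <= mdist x y + mdist y z
}.

Definition is_glb (S : R -> Prop) (m : R) : Prop :=
  (forall x, S x -> m <= x) /\ (forall b, (forall x, S x -> b <= x) -> b <= m).

Definition compact_space (X : MetricSpace) : Prop :=
  forall u : nat -> X, exists (phi : nat -> nat) (l : X),
    (forall n m, (n < m)%nat -> (phi n < phi m)%nat) /\
    (forall eps, 0 < eps -> exists N, forall n, (N <= n)%nat -> mdist X (u (phi n)) l < eps).

Definition inf_dist_is (W : MetricSpace) (p : W) (Q : W -> Prop) (v : R) : Prop :=
  is_glb (fun y => exists q, Q q /\ y = mdist W p q) v.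

Definition hausdorff_is (W : MetricSpace) (P Q : W -> Prop) (h : R) : Prop :=
  exists a b,
    is_lub (fun x => exists p, P p /\ inf_dist_is W p Q x) a /\
    is_lub (fun x => exists q, Q q /\ inf_dist_is W q P x) b /\
    h = Rmax a b.

Definition closed_set (W : MetricSpace) (A : W -> Prop) : Prop :=
  forall x, (forall eps, 0 < eps -> exists a, A a /\ mdist W x a < eps) -> A x.
Definition bounded_set (W : MetricSpace) (A : W -> Prop) : Prop :=
  exists x0 r, forall a, A a -> mdist W x0 a <= r.
Definition nonempty_set (W : MetricSpace) (A : W -> Prop) : Prop :=
  exists a, A a.

Definition Hcarrier (W : MetricSpace) : Type :=
  { A : W -> Prop | nonempty_set W A /\ bounded_set W A /\ closed_set W A }.

(** The Hausdorff distance on H(W), as a function (chosen value of the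
    Hausdorff-distance relation, which exists and is unique on H(W)). *)
Definition Hdist (W : MetricSpace) (A B : Hcarrier W) : R :=
  epsilon (inhabits 0) (fun h => hausdorff_is W (proj1_sig A) (proj1_sig B) h).

Definition isometric_embedding {T : Type} (d : T -> T -> R) (Z : MetricSpace) (f : T -> Z) : Prop :=
  forall x y, mdist Z (f x) (f y) = d x y.

Definition image {T : Type} {Z : Type} (f : T -> Z) : Z -> Prop :=
  fun z => exists x, z = f x.

Definition GH_dist_is {T1 T2 : Type} (d1 : T1 -> T1 -> R) (d2 : T2 -> T2 -> R) (g : R) : Prop :=
  is_glb (fun r => exists (Z : MetricSpace) (f : T1 -> Z) (f' : T2 -> Z),
             isometric_embedding d1 Z f /\ isometric_embedding d2 Z f' /\
             exists h, hausdorff_is Z (image f) (image f') h /\ h <= r) g.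

(* Main.v *)
Require Import Defs.
From Stdlib Require Import Reals.
From Stdlib Require Import Lra Lia Classical ClassicalEpsilon FunctionalExtensionality PropExtensionality ProofIrrelevance.
Require Import Defs.
Open Scope R_scope.

Definition md_nonneg := Defs.dist_nonneg.
Definition md_eq0 := Defs.dist_eq0.
Definition md_sym := Defs.dist_sym.
Definition md_tri := Defs.dist_tri.

Lemma le_eps (a b : R) : (forall e, 0 < e -> a <= b + e) -> a <= b.
Proof. apply Rle_plus_epsilon. Qed.

Lemma glb_exists (S : R -> Prop) : (exists x, S x) -> (forall x, S x -> 0 <= x) -> exists m, is_glb S m.
Proof.
  intros [x0 Hx0] Hlb.
  destruct (completeness (fun y => S (- y))) as [l [Hub Hl]].
  - exists 0. intros y Hy. specialize (Hlb _ Hy). lra.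
  - exists (- x0). now rewrite Ropp_involutive.
  - exists (- l). split.
    + intros x Hx. assert (-x <= l). { apply Hub. now rewrite Ropp_involutive. } lra.
    + intros b Hb. assert (l <= - b). { apply Hl. intros y Hy. specialize (Hb _ Hy). lra. } lra.
Qed.

Lemma lub_exists (S : R -> Prop) M : (exists x, S x) -> (forall x, S x -> x <= M) -> exists m, is_lub S m.
Proof. intros Hne Hub. destruct (completeness S) as [m Hm]. exists M; exact Hub. exact Hne. exists m; exact Hm. Qed.

Lemma lub_nonempty (S : R -> Prop) m : is_lub S m -> exists x, S x.
Proof. intros [_ H]. apply NNPP; intro Hn. assert (m <= m - 1). { apply H. intros x Hx. exfalso; eauto. } lra. Qed.

Definition Dval (W : MetricSpace) (P Q : W -> Prop) : R :=
  epsilon (inhabits 0) (fun h => hausdorff_is W P Q h).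

Definition approx (W : MetricSpace) (P Q : W -> Prop) (t : R) : Prop :=
  (forall p, P p -> forall e, 0 < e -> exists q, Q q /\ mdist W p q <= t + e) /\
  (forall q, Q q -> forall e, 0 < e -> exists p, P p /\ mdist W q p <= t + e).

Definition NE (W : MetricSpace) (P : W -> Prop) := exists p, P p.
Definition Bnd (W : MetricSpace) (P Q : W -> Prop) := exists M, forall p q, P p -> Q q -> mdist W p q <= M.

Lemma inf_exists (W : MetricSpace) (p : W) (Q : W -> Prop) : NE W Q -> exists v, inf_dist_is W p Q v.
Proof.
  intros [q0 Hq0]. unfold inf_dist_is. apply glb_exists.
  - exists (mdist W p q0). eauto.
  - intros x [q [_ ->]]. apply md_nonneg.
Qed.

Lemma hausdorff_exists W P Q : NE W P -> NE W Q -> Bnd W P Q -> exists h, hausdorff_is W P Q h.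
Proof.
  intros HP HQ [M HM]. destruct HP as [p0 Hp0]. destruct HQ as [q0 Hq0].
  destruct (lub_exists (fun x => exists p, P p /\ inf_dist_is W p Q x) M) as [a Ha].
  { destruct (inf_exists W p0 Q (ex_intro _ q0 Hq0)) as [v Hv]. eauto. }
  { intros x [p [Hp [Hlb _]]]. apply Rle_trans with (mdist W p q0). apply Hlb. eauto. apply HM; auto. }
  destruct (lub_exists (fun x => exists q, Q q /\ inf_dist_is W q P x) M) as [b Hb].
  { destruct (inf_exists W q0 P (ex_intro _ p0 Hp0)) as [v Hv]. eauto. }
  { intros x [q [Hq [Hlb _]]]. apply Rle_trans with (mdist W q p0). apply Hlb. eauto.
    rewrite md_sym. apply HM; auto. }
  exists (Rmax a b). exists a, b. auto.
Qed.

Lemma inf_approx W p Q v e : inf_dist_is W p Q v -> 0 < e -> exists q, Q q /\ mdist W p q <= v + e.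
Proof.
  intros [Hlb Hgl] He. apply NNPP; intro Hn.
  assert (v + e <= v). { apply Hgl. intros x [q [Hq ->]].
    destruct (Rle_or_lt (mdist W p q) (v+e)) as [h|h]. exfalso; eauto. lra. }
  lra.
Qed.

Lemma hausdorff_approx W P Q h : hausdorff_is W P Q h -> approx W P Q h.
Proof.
  intros [a [b [Ha [Hb ->]]]]. split.
  - intros p Hp e He.
    destruct (lub_nonempty _ _ Hb) as [x [q0 [Hq0 _]]].
    destruct (inf_exists W p Q (ex_intro _ q0 Hq0)) as [v Hv].
    destruct (inf_approx W p Q v e Hv He) as [q [Hq Hd]].
    exists q. split; auto.
    assert (v <= a) by (apply (proj1 Ha); eauto). pose proof (Rmax_l a b). lra.
  - intros q Hq e He.
    destruct (lub_nonempty _ _ Ha) as [x [p0 [Hp0 _]]].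
    destruct (inf_exists W q P (ex_intro _ p0 Hp0)) as [v Hv].
    destruct (inf_approx W q P v e Hv He) as [p [Hp Hd]].
    exists p. split; auto.
    assert (v <= b) by (apply (proj1 Hb); eauto). pose proof (Rmax_r a b). lra.
Qed.

Lemma hausdorff_le W P Q h t : hausdorff_is W P Q h -> approx W P Q t -> h <= t.
Proof.
  intros [a [b [Ha [Hb ->]]]] [H1 H2].
  apply Rmax_lub.
  - apply Ha. intros x [p [Hp Hv]]. apply le_eps. intros e He.
    destruct (H1 p Hp e He) as [q [Hq Hd]].
    apply Rle_trans with (mdist W p q); [apply (proj1 Hv); eauto | exact Hd].
  - apply Hb. intros x [q [Hq Hv]]. apply le_eps. intros e He.
    destruct (H2 q Hq e He) as [p [Hp Hd]].
    apply Rle_trans with (mdist W q p); [apply (proj1 Hv); eauto | exact Hd].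
Qed.

Lemma hausdorff_nonneg W P Q h : hausdorff_is W P Q h -> 0 <= h.
Proof.
  intros [a [b [Ha [Hb ->]]]].
  destruct (lub_nonempty _ _ Ha) as [x [p [Hp Hv]]].
  assert (0 <= x). { apply (proj2 Hv). intros y [q [_ ->]]. apply md_nonneg. }
  assert (x <= a) by (apply (proj1 Ha); eauto).
  pose proof (Rmax_l a b). lra.
Qed.

Lemma hausdorff_sym W P Q h : hausdorff_is W P Q h -> hausdorff_is W Q P h.
Proof. intros [a [b [Ha [Hb ->]]]]. exists b, a. rewrite Rmax_comm. auto. Qed.

Lemma Dval_spec W P Q : (exists h, hausdorff_is W P Q h) -> hausdorff_is W P Q (Dval W P Q).
Proof. intros H. unfold Dval. apply epsilon_spec. exact H. Qed.

Lemma Dval_eq W P Q h : hausdorff_is W P Q h -> Dval W P Q = h.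
Proof.
  intros H. pose proof (Dval_spec W P Q (ex_intro _ h H)) as H'.
  apply Rle_antisym; [apply (hausdorff_le W P Q _ _ H') | apply (hausdorff_le W P Q _ _ H)]; apply hausdorff_approx; auto.
Qed.

Lemma approx_sym W P Q t : approx W P Q t -> approx W Q P t.
Proof. intros [H1 H2]. split; auto. Qed.

Lemma approx_tri W P Q R s t : approx W P Q s -> approx W Q R t -> approx W P R (s + t).
Proof.
  intros [H1 H2] [K1 K2]. split.
  - intros p Hp e He. destruct (H1 p Hp (e/2)) as [q [Hq Hd]]. lra.
    destruct (K1 q Hq (e/2)) as [r [Hr Hd']]. lra.
    exists r. split; auto. pose proof (md_tri W p q r). lra.
  - intros r Hr e He. destruct (K2 r Hr (e/2)) as [q [Hq Hd]]. lra.
    destruct (H2 q Hq (e/2)) as [p [Hp Hd']]. lra.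
    exists p. split; auto. pose proof (md_tri W r q p). lra.
Qed.

Lemma approx_self W P : approx W P P 0.
Proof.
  split; intros p Hp e He; exists p; split; auto; rewrite (proj2 (md_eq0 W p p) eq_refl); lra.
Qed.
Lemma phi_ge (phi : nat -> nat) : (forall n m, (n < m)%nat -> (phi n < phi m)%nat) -> forall n, (n <= phi n)%nat.
Proof. intros H n. induction n. lia. specialize (H n (S n) ltac:(lia)). lia. Qed.

Lemma nat_large (r : R) : exists n : nat, r < INR n.
Proof.
  destruct (Rle_or_lt r 0) as [h|h].
  - exists 1%nat. simpl. lra.
  - destruct (archimed_cor1 (/ r)) as [N [HN HN0]]. apply Rinv_0_lt_compat; lra.
    exists N. assert (0 < INR N) by (apply lt_0_INR; lia).
    rewrite <- (Rinv_inv r). rewrite <- (Rinv_inv (INR N)).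
    apply Rinv_lt_contravar. apply Rmult_lt_0_compat; apply Rinv_0_lt_compat; lra. exact HN.
Qed.

Lemma cpt_bounded (X : MetricSpace) (x0 : X) : compact_space X -> exists M, forall x, mdist X x0 x <= M.
Proof.
  intros hX. apply NNPP; intro Hn.
  assert (Hu : forall n : nat, exists x, INR n < mdist X x0 x).
  { intro n. apply NNPP; intro Hn2. apply Hn. exists (INR n). intro x.
    destruct (Rle_or_lt (mdist X x0 x) (INR n)); auto. exfalso; eauto. }
  pose (u := fun n => proj1_sig (constructive_indefinite_description _ (Hu n))).
  assert (Hu' : forall n, INR n < mdist X x0 (u n)).
  { intro n. unfold u. destruct constructive_indefinite_description; auto. }
  destruct (hX u) as [phi [l [Hphi Hc]]].
  destruct (Hc 1 Rlt_0_1) as [N HN].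
  destruct (nat_large (mdist X x0 l + 1)) as [k Hk].
  set (n := max N k).
  specialize (HN n (Nat.le_max_l _ _)).
  pose proof (Hu' (phi n)). pose proof (phi_ge phi Hphi n).
  assert (INR k <= INR (phi n)) by (apply le_INR; unfold n in *; lia).
  pose proof (md_tri X x0 l (u (phi n))). rewrite (md_sym X l) in *. lra.
Qed.

Lemma cpt_attain (Y Z : MetricSpace) (g : Y -> Z) (z : Z) (h : R) :
  compact_space Y -> isometric_embedding (mdist Y) Z g ->
  (forall e, 0 < e -> exists y, mdist Z z (g y) <= h + e) ->
  exists y, mdist Z z (g y) <= h.
Proof.
  intros hY hg H.
  assert (Hu : forall n:nat, exists y, mdist Z z (g y) <= h + / (INR n + 1)).
  { intro n. apply H. apply Rinv_0_lt_compat. pose proof (pos_INR n). lra. }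
  pose (u := fun n => proj1_sig (constructive_indefinite_description _ (Hu n))).
  assert (Hu' : forall n, mdist Z z (g (u n)) <= h + / (INR n + 1)).
  { intro n. unfold u. destruct constructive_indefinite_description; auto. }
  destruct (hY u) as [phi [l [Hphi Hc]]].
  exists l. apply le_eps. intros e He.
  destruct (Hc (e/2) ltac:(lra)) as [N HN].
  destruct (archimed_cor1 (e/2) ltac:(lra)) as [k [Hk Hk0]].
  set (n := max N k).
  specialize (HN n (Nat.le_max_l _ _)).
  pose proof (Hu' (phi n)). pose proof (phi_ge phi Hphi n).
  assert (INR k <= INR (phi n)) by (apply le_INR; unfold n in *; lia).
  assert (/ (INR (phi n) + 1) <= / INR k).
  { apply Rinv_le_contravar. apply lt_0_INR; lia. lra. }
  pose proof (md_tri Z z (g (u (phi n))) (g l)). rewrite (hg (u (phi n)) l) in *. lra.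
Qed.

Definition fimg {X Z : MetricSpace} (f : X -> Z) (A : Hcarrier X) : Z -> Prop :=
  fun z => exists a, proj1_sig A a /\ z = f a.

Lemma Hcarrier_ext (X : MetricSpace) (A A' : Hcarrier X) :
  (forall x, proj1_sig A x <-> proj1_sig A' x) -> A = A'.
Proof.
  destruct A as [P HP], A' as [P' HP']. simpl. intros H.
  assert (P = P') by (apply functional_extensionality; intro; apply propositional_extensionality; auto).
  subst. f_equal. apply proof_irrelevance.
Qed.

Lemma Hne (X : MetricSpace) (A : Hcarrier X) : exists a, proj1_sig A a.
Proof. exact (proj1 (proj2_sig A)). Qed.

Lemma fimg_ne {X Z : MetricSpace} (f : X -> Z) A : NE Z (fimg f A).
Proof. destruct (Hne X A) as [a Ha]. exists (f a), a. auto. Qed.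

Definition single (X : MetricSpace) (x0 : X) : Hcarrier X.
Proof.
  exists (fun x => x = x0). split; [|split].
  - exists x0; reflexivity.
  - exists x0, 0. intros a ->. rewrite (proj2 (md_eq0 X x0 x0) eq_refl). lra.
  - intros x H. apply md_eq0. apply Rle_antisym; [|apply md_nonneg].
    apply le_eps. intros e He. destruct (H e He) as [a [-> Ha]]. lra.
Defined.

Lemma choose_partner (X Y Z : MetricSpace) (f : X -> Z) (f' : Y -> Z) (h : R) :
  compact_space Y -> isometric_embedding (mdist X) Z f -> isometric_embedding (mdist Y) Z f' ->
  (forall x e, 0 < e -> exists y, mdist Z (f x) (f' y) <= h + e) ->
  forall A : Hcarrier X, exists B : Hcarrier Y, approx Z (fimg f A) (fimg f' B) h.
Proof.
  intros hY hf hf' Hx A.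
  set (PA := proj1_sig A).
  assert (Hat : forall x, exists y, mdist Z (f x) (f' y) <= h).
  { intro x. apply cpt_attain; auto. }
  set (PB := fun y => forall e, 0 < e -> exists a, PA a /\ mdist Z (f a) (f' y) <= h + e).
  destruct (Hne X A) as [a0 Ha0].
  destruct (Hat a0) as [l0 Hl0].
  assert (HB : nonempty_set Y PB /\ bounded_set Y PB /\ closed_set Y PB).
  { split; [|split].
    - exists l0. intros e He. exists a0. split. exact Ha0. lra.
    - destruct (cpt_bounded Y l0 hY) as [M HM]. exists l0, M. auto.
    - intros y Hy e He. destruct (Hy (e/2) ltac:(lra)) as [b [Hb Hd]].
      destruct (Hb (e/2) ltac:(lra)) as [a [Ha Had]]. exists a. split; auto.
      pose proof (md_tri Z (f a) (f' b) (f' y)). rewrite (hf' b y), (md_sym Y b y) in *. lra. }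
  exists (exist _ PB HB). split.
  - intros p [a [Ha ->]] e He. destruct (Hat a) as [y Hy].
    exists (f' y). split.
    + exists y. split; auto. simpl. intros e' He'. exists a. split; auto. lra.
    + lra.
  - intros q [y [Hy ->]] e He. destruct (Hy e He) as [a [Ha Hd]].
    exists (f a). split. exists a; auto. rewrite md_sym. exact Hd.
Qed.

Lemma approx_transport (X Z : MetricSpace) (f : X -> Z) (A A' : Hcarrier X) t :
  isometric_embedding (mdist X) Z f ->
  (approx X (proj1_sig A) (proj1_sig A') t <-> approx Z (fimg f A) (fimg f A') t).
Proof.
  intros hf. split.
  - intros [H1 H2]. split.
    + intros p [a [Ha ->]] e He. destruct (H1 a Ha e He) as [a' [Ha' Hd]].
      exists (f a'). split. exists a'; auto. rewrite hf. auto.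
    + intros p [a [Ha ->]] e He. destruct (H2 a Ha e He) as [a' [Ha' Hd]].
      exists (f a'). split. exists a'; auto. rewrite hf. auto.
  - intros [H1 H2]. split.
    + intros a Ha e He. destruct (H1 (f a) (ex_intro _ a (conj Ha eq_refl)) e He) as [q [[a' [Ha' ->]] Hd]].
      exists a'. rewrite hf in Hd. auto.
    + intros a Ha e He. destruct (H2 (f a) (ex_intro _ a (conj Ha eq_refl)) e He) as [q [[a' [Ha' ->]] Hd]].
      exists a'. rewrite hf in Hd. auto.
Qed.

Lemma Hcarrier_haus (X : MetricSpace) (x0 : X) (A A' : Hcarrier X) :
  compact_space X -> hausdorff_is X (proj1_sig A) (proj1_sig A') (Hdist X A A').
Proof.
  intros hX. apply Dval_spec. apply hausdorff_exists.
  - apply Hne.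
  - apply Hne.
  - destruct (cpt_bounded X x0 hX) as [M HM]. exists (M + M). intros p q _ _.
    pose proof (HM p) as H1; pose proof (HM q) as H2; pose proof (md_tri X p x0 q) as H3.
    rewrite (md_sym X p x0) in H3; lra.
Qed.

Lemma approx_bound W P Q M : NE W P -> NE W Q -> (forall p q, P p -> Q q -> mdist W p q <= M) -> approx W P Q M.
Proof.
  intros [p0 Hp0] [q0 Hq0] H. split.
  - intros p Hp e He. exists q0. split; auto. specialize (H p q0 Hp Hq0). lra.
  - intros q Hq e He. exists p0. split; auto. rewrite md_sym. specialize (H p0 q Hp0 Hq). lra.
Qed.

Lemma Dzero (X Z : MetricSpace) (f : X -> Z) (A A' : Hcarrier X) D :
  isometric_embedding (mdist X) Z f -> hausdorff_is Z (fimg f A) (fimg f A') D -> D = 0 -> A = A'.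
Proof.
  intros hf HD ->. destruct (hausdorff_approx _ _ _ _ HD) as [H1 H2].
  apply Hcarrier_ext. intro a. split; intro Ha.
  - apply (proj2 (proj2 (proj2_sig A'))). intros e He.
    destruct (H1 (f a) (ex_intro _ a (conj Ha eq_refl)) (e/2) ltac:(lra)) as [q [[a' [Ha' ->]] Hd]].
    exists a'. rewrite hf in Hd. split; auto. lra.
  - apply (proj2 (proj2 (proj2_sig A))). intros e He.
    destruct (H2 (f a) (ex_intro _ a (conj Ha eq_refl)) (e/2) ltac:(lra)) as [q [[a' [Ha' ->]] Hd]].
    exists a'. rewrite hf in Hd. split; auto. lra.
Qed.

Lemma transport_eq (X Z : MetricSpace) (x0 : X) (f : X -> Z) (A A' : Hcarrier X) :
  compact_space X -> isometric_embedding (mdist X) Z f ->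
  hausdorff_is Z (fimg f A) (fimg f A') (Dval Z (fimg f A) (fimg f A')) ->
  Dval Z (fimg f A) (fimg f A') = Hdist X A A'.
Proof.
  intros hX hf HZ. pose proof (Hcarrier_haus X x0 A A' hX) as HX.
  apply Rle_antisym.
  - apply (hausdorff_le _ _ _ _ _ HZ). apply approx_transport; auto. apply hausdorff_approx; auto.
  - apply (hausdorff_le _ _ _ _ _ HX). apply (approx_transport X Z f); auto. apply hausdorff_approx; auto.
Qed.

Definition cr {A B : Type} (d : R) (u v : A + B) : R :=
  match u, v with inl _, inr _ => d | inr _, inl _ => d | _, _ => 0 end.

Lemma ML (X Y : MetricSpace) (x0 : X) (y0 : Y) (hX : compact_space X) (hY : compact_space Y)
  (Z : MetricSpace) (f : X -> Z) (f' : Y -> Z) (h dl : R) :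
  isometric_embedding (mdist X) Z f -> isometric_embedding (mdist Y) Z f' ->
  hausdorff_is Z (image f) (image f') h -> 0 < dl ->
  exists (Z' : MetricSpace) (F : Hcarrier X -> Z') (F' : Hcarrier Y -> Z'),
    isometric_embedding (Hdist X) Z' F /\ isometric_embedding (Hdist Y) Z' F' /\
    exists h', hausdorff_is Z' (image F) (image F') h' /\ h' <= h + dl.
Proof.
  intros hf hf' Hh Hdl.
  destruct (cpt_bounded X x0 hX) as [Mx HMx].
  destruct (cpt_bounded Y y0 hY) as [My HMy].
  set (C := mdist Z (f x0) (f' y0)).
  set (K := Mx + My + C).
  assert (Hgood : forall z, ((exists x, z = f x) \/ (exists y, z = f' y)) -> mdist Z z (f x0) <= K).
  { intros z [[x ->]|[y ->]].
    - rewrite hf. pose proof (HMx x). pose proof (md_nonneg Z (f x0) (f' y0)). unfold K, C. specialize (HMy y0). pose proof (md_nonneg Y y0 y0). rewrite (md_sym X x x0). lra.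
    - pose proof (md_tri Z (f' y) (f' y0) (f x0)). rewrite hf' in H. rewrite (md_sym Z (f' y0)) in H.
      rewrite (md_sym Y y y0) in H. pose proof (HMy y). pose proof (HMx x0). pose proof (md_nonneg X x0 x0). unfold K, C. lra. }
  assert (HK : forall z1 z2, ((exists x, z1 = f x) \/ (exists y, z1 = f' y)) ->
                ((exists x, z2 = f x) \/ (exists y, z2 = f' y)) -> mdist Z z1 z2 <= 2 * K).
  { intros z1 z2 H1 H2. pose proof (Hgood z1 H1). pose proof (Hgood z2 H2).
    pose proof (md_tri Z z1 (f x0) z2). rewrite (md_sym Z (f x0) z2) in H3. lra. }
  pose (S := fun u : Hcarrier X + Hcarrier Y => match u with inl A => fimg f A | inr B => fimg f' B end).
  assert (HSg : forall u z, S u z -> ((exists x, z = f x) \/ (exists y, z = f' y))).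
  { intros [A|B] z [a [_ ->]]; eauto. }
  assert (HSne : forall u, NE Z (S u)). { intros [A|B]; apply fimg_ne. }
  assert (HS : forall u v, hausdorff_is Z (S u) (S v) (Dval Z (S u) (S v))).
  { intros u v. apply Dval_spec. apply hausdorff_exists; auto. exists (2 * K). intros p q Hp Hq. apply HK; eauto. }
  assert (HSK : forall u v, Dval Z (S u) (S v) <= 2 * K).
  { intros u v. apply (hausdorff_le _ _ _ _ _ (HS u v)). apply approx_bound; auto. intros p q Hp Hq. apply HK; eauto. }
  pose (d := fun u v => Dval Z (S u) (S v) + cr dl u v).
  assert (Hnn : forall u v, 0 <= d u v).
  { intros u v. unfold d. pose proof (hausdorff_nonneg _ _ _ _ (HS u v)). destruct u, v; unfold cr; lra. }
  assert (Hself : forall u, Dval Z (S u) (S u) = 0).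
  { intros u. apply Rle_antisym. apply (hausdorff_le _ _ _ _ _ (HS u u)). apply approx_self.
    apply (hausdorff_nonneg _ _ _ _ (HS u u)). }
  assert (Heq : forall u v, d u v = 0 <-> u = v).
  { intros u v. split.
    - unfold d. pose proof (hausdorff_nonneg _ _ _ _ (HS u v)).
      destruct u as [A|B], v as [A'|B']; unfold cr; intro H0.
      + f_equal. apply (Dzero X Z f A A' _ hf (HS (inl A) (inl A'))). lra.
      + lra.
      + lra.
      + f_equal. apply (Dzero Y Z f' B B' _ hf' (HS (inr B) (inr B'))). lra.
    - intros <-. unfold d. rewrite Hself. destruct u; unfold cr; lra. }
  assert (Hsym : forall u v, d u v = d v u).
  { intros u v. unfold d. rewrite (Dval_eq _ _ _ _ (hausdorff_sym _ _ _ _ (HS u v))).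
    destruct u, v; reflexivity. }
  assert (Htri : forall u v w, d u w <= d u v + d v w).
  { intros u v w. unfold d.
    assert (Dval Z (S u) (S w) <= Dval Z (S u) (S v) + Dval Z (S v) (S w)).
    { apply (hausdorff_le _ _ _ _ _ (HS u w)). apply approx_tri with (S v); apply hausdorff_approx; auto. }
    pose proof (hausdorff_nonneg _ _ _ _ (HS u v)). pose proof (hausdorff_nonneg _ _ _ _ (HS v w)).
    destruct u, v, w; unfold cr; lra. }
  set (Z' := Build_MetricSpace (Hcarrier X + Hcarrier Y) d Hnn Heq Hsym Htri).
  exists Z', inl, inr. split; [|split].
  - intros A A'. simpl. unfold d. unfold cr. rewrite Rplus_0_r.
    apply (transport_eq X Z x0 f A A' hX hf (HS (inl A) (inl A'))).
  - intros B B'. simpl. unfold d. unfold cr. rewrite Rplus_0_r.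
    apply (transport_eq Y Z y0 f' B B' hY hf' (HS (inr B) (inr B'))).
  - destruct (hausdorff_approx _ _ _ _ Hh) as [Ha1 Ha2].
    assert (Hex : exists h', hausdorff_is Z' (image (@inl (Hcarrier X) (Hcarrier Y))) (image inr) h').
    { apply hausdorff_exists.
      - exists (inl (single X x0)), (single X x0). reflexivity.
      - exists (inr (single Y y0)), (single Y y0). reflexivity.
      - exists (2 * K + dl). intros p q _ _. simpl. unfold d. pose proof (HSK p q).
        destruct p, q; unfold cr; lra. }
    destruct Hex as [h' Hh']. exists h'. split; auto.
    apply (hausdorff_le _ _ _ _ _ Hh'). split.
    + intros p [A ->] e He.
      destruct (choose_partner X Y Z f f' h hY hf hf') with (A := A) as [B HB].
      { intros x e' He'. destruct (Ha1 (f x) (ex_intro _ x eq_refl) e' He') as [q [[y ->] Hd]]. eauto. }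
      exists (inr B). split. exists B; reflexivity. simpl. unfold d. unfold cr.
      pose proof (hausdorff_le _ _ _ _ _ (HS (inl A) (inr B)) HB). lra.
    + intros q [B ->] e He.
      destruct (choose_partner Y X Z f' f h hX hf' hf) with (A := B) as [A HA].
      { intros y e' He'. destruct (Ha2 (f' y) (ex_intro _ y eq_refl) e' He') as [p [[x ->] Hd]]. eauto. }
      exists (inl A). split. exists A; reflexivity. simpl. unfold d. unfold cr.
      pose proof (hausdorff_le _ _ _ _ _ (HS (inr B) (inl A)) HA). lra.
Qed.

Definition d0 (X Y : MetricSpace) (x0 : X) (y0 : Y) (u v : X + Y) : R :=
  match u, v with
  | inl x, inl x' => mdist X x x'
  | inr y, inr y' => mdist Y y y'
  | inl x, inr y => mdist X x x0 + 1 + mdist Y y0 y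
  | inr y, inl x => mdist X x x0 + 1 + mdist Y y0 y
  end.

Lemma Z0_exists (X Y : MetricSpace) (x0 : X) (y0 : Y) (hX : compact_space X) (hY : compact_space Y) :
  exists (Z : MetricSpace) (f : X -> Z) (f' : Y -> Z),
    isometric_embedding (mdist X) Z f /\ isometric_embedding (mdist Y) Z f' /\
    exists h, hausdorff_is Z (image f) (image f') h.
Proof.
  assert (Hnn : forall u v, 0 <= d0 X Y x0 y0 u v).
  { intros [a|a] [b|b]; simpl; try apply md_nonneg;
    try pose proof (md_nonneg X a x0); try pose proof (md_nonneg X b x0);
    try pose proof (md_nonneg Y y0 a); try pose proof (md_nonneg Y y0 b); lra. }
  assert (Heq : forall u v, d0 X Y x0 y0 u v = 0 <-> u = v).
  { intros [a|a] [b|b]; simpl; split; intro H.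
    - f_equal. apply md_eq0; auto.
    - injection H as ->. apply md_eq0; auto.
    - pose proof (md_nonneg X a x0). pose proof (md_nonneg Y y0 b). lra.
    - discriminate.
    - pose proof (md_nonneg X b x0). pose proof (md_nonneg Y y0 a). lra.
    - discriminate.
    - f_equal. apply md_eq0; auto.
    - injection H as ->. apply md_eq0; auto. }
  assert (Hsym : forall u v, d0 X Y x0 y0 u v = d0 X Y x0 y0 v u).
  { intros [a|a] [b|b]; simpl; auto; apply md_sym. }
  assert (Htri : forall u v w, d0 X Y x0 y0 u w <= d0 X Y x0 y0 u v + d0 X Y x0 y0 v w).
  { intros [a|a] [b|b] [c|c]; simpl.
    - apply md_tri.
    - pose proof (md_tri X a b x0). lra.
    - pose proof (md_tri X a x0 c). rewrite (md_sym X x0 c) in H. pose proof (md_nonneg Y y0 b). lra.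
    - pose proof (md_tri Y y0 b c). lra.
    - pose proof (md_tri X c b x0). rewrite (md_sym X c b) in H. lra.
    - pose proof (md_tri Y a y0 c). rewrite (md_sym Y a y0) in H. pose proof (md_nonneg X b x0). lra.
    - pose proof (md_tri Y y0 b a). rewrite (md_sym Y b a) in H. lra.
    - apply md_tri. }
  set (Z := Build_MetricSpace (X + Y) (d0 X Y x0 y0) Hnn Heq Hsym Htri).
  exists Z, inl, inr. split; [|split]; try (intros ? ?; reflexivity).
  apply hausdorff_exists.
  - exists (inl x0), x0. reflexivity.
  - exists (inr y0), y0. reflexivity.
  - destruct (cpt_bounded X x0 hX) as [Mx HMx].
    destruct (cpt_bounded Y y0 hY) as [My HMy].
    exists (Mx + 1 + My). intros p q [x ->] [y ->]. simpl.
    pose proof (HMx x). pose proof (HMy y). rewrite (md_sym X x x0). lra.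
Qed.

Theorem mainTheorem7 (X Y : MetricSpace) (x0 : X) (y0 : Y)
  (hX : compact_space X) (hY : compact_space Y) :
  exists gH g,
    GH_dist_is (Hdist X) (Hdist Y) gH /\
    GH_dist_is (mdist X) (mdist Y) g /\
    gH <= g.
Proof.
  unfold GH_dist_is.
  set (SXY := fun r => exists (Z : MetricSpace) (f : X -> Z) (f' : Y -> Z),
             isometric_embedding (mdist X) Z f /\ isometric_embedding (mdist Y) Z f' /\
             exists h, hausdorff_is Z (image f) (image f') h /\ h <= r).
  set (SH := fun r => exists (Z : MetricSpace) (f : Hcarrier X -> Z) (f' : Hcarrier Y -> Z),
             isometric_embedding (Hdist X) Z f /\ isometric_embedding (Hdist Y) Z f' /\
             exists h, hausdorff_is Z (image f) (image f') h /\ h <= r).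
  assert (HML : forall r, SXY r -> forall dl, 0 < dl -> exists r', SH r' /\ r' <= r + dl).
  { intros r [Z [f [f' [hf [hf' [h [Hh Hr]]]]]]] dl Hdl.
    destruct (ML X Y x0 y0 hX hY Z f f' h dl hf hf' Hh Hdl) as [Z' [F [F' [hF [hF' [h' [Hh' Hle]]]]]]].
    exists h'. split. exists Z', F, F'. repeat split; auto. exists h'. split; auto. lra. lra. }
  destruct (Z0_exists X Y x0 y0 hX hY) as [Z [f [f' [hf [hf' [h Hh]]]]]].
  assert (Hr0 : SXY h). { exists Z, f, f'. repeat split; auto. exists h. split; auto. lra. }
  destruct (glb_exists SXY) as [g Hg].
  { exists h; auto. }
  { intros r [Z1 [g1 [g1' [_ [_ [h1 [Hh1 Hr1]]]]]]]. pose proof (hausdorff_nonneg _ _ _ _ Hh1). lra. }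
  destruct (glb_exists SH) as [gH HgH].
  { destruct (HML h Hr0 1 Rlt_0_1) as [r' [Hr' _]]. eauto. }
  { intros r [Z1 [g1 [g1' [_ [_ [h1 [Hh1 Hr1]]]]]]]. pose proof (hausdorff_nonneg _ _ _ _ Hh1). lra. }
  exists gH, g. split; [exact HgH|split; [exact Hg|]].
  apply (proj2 Hg). intros r Hr. apply le_eps. intros dl Hdl.
  destruct (HML r Hr dl Hdl) as [r' [Hr' Hle]].
  pose proof (proj1 HgH r' Hr'). lra.
Qed.
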